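(* Let $f\in\mathbb Z[x]$ be an irreducible polynomial and $\beta$ a root of $f$, and let $P$ be a non-archimedean prime divisor of $\mathbb Q(\beta)$ which is stable. If $g\in O_P[x)$ satisfies $e_P(g)=0$, then $g$ is divisible by $\beta-x$ in $O_P[x)$, i.e. $g=(\beta-x)h$ for some $h\in O_P[x)$.
   Context: A prime divisor $P$ of $\mathbb Q(\beta)$ (an equivalence class of nontrivial absolute values) is stable if $\beta^n\to0$ as $n\to\infty$ in the $P$-topology. $O_P\subset\mathbb Q(\beta)$ is the ring of elements of $P$-absolute value at most $1$, and $K_P$ the completion of $\mathbb Q(\beta)$ at $P$. $O_P[x)$ denotes formal series $\sum_{n\ge m}a_nx^n$, $a_n\in O_P$. For stable $P$, $e_P:O_P[x)\to K_P$ is the evaluation map $\sum a_nx^n\mapsto\sum a_n\beta^n$ (convergent in $K_P$). *)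

(* Defs.v *)
From HB Require Import structures.
From mathcomp Require Import all_boot all_order all_algebra.
From mathcomp Require Import reals.
Set Implicit Arguments. Unset Strict Implicit. Unset Printing Implicit Defensive.
Import Order.TTheory GRing.Theory Num.Theory.
Local Open Scope ring_scope.

(* K together with beta is a model of Q(beta): characteristic 0 and every
   element is a rational polynomial expression in beta. *)
Definition generated_by (K : fieldType) (beta : K) : Prop :=
  forall x : K, exists p : {poly rat}, x = (map_poly ratr p).[beta].

(* A non-archimedean (nontrivial) absolute value on K, real valued;
   it is a representative of the prime divisor P. *)
Definition nonarch_absval (K : fieldType) (R : realType) (v : K -> R) : Prop :=
  [/\ forall x, 0 <= v x,
      forall x, v x = 0 <-> x = 0,
      forall x y, v (x * y) = v x * v y,
      forall x y, v (x + y) <= Num.max (v x) (v y)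
    & exists x, x != 0 /\ v x != 1].

Definition stable (K : fieldType) (R : realType) (v : K -> R) (beta : K) : Prop :=
  forall e : R, 0 < e -> exists N : nat, forall n : nat, (N <= n)%N -> v (beta ^+ n) < e.

(* Formal Laurent series sum_{n >= m} a_n x^n are functions int -> K
   vanishing below some index m. *)
Definition supported_from (K : fieldType) (a : int -> K) (m : int) : Prop :=
  forall n : int, n < m -> a n = 0.

Definition in_OP (K : fieldType) (R : realType) (v : K -> R) (a : int -> K) : Prop :=
  forall n : int, v (a n) <= 1.

Definition OP_laurent (K : fieldType) (R : realType) (v : K -> R) (a : int -> K) : Prop :=
  in_OP v a /\ exists m : int, supported_from a m.

Definition psum (K : fieldType) (a : int -> K) (beta : K) (m : int) (N : nat) : K :=
  \sum_(k < N) a (m + k%:Z) * beta ^ (m + k%:Z).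

(* e_P(a) = 0 : the partial sums converge to 0 in K_P, i.e. their
   P-absolute values tend to 0 (K embeds isometrically in K_P). *)
Definition evalP_zero (K : fieldType) (R : realType) (v : K -> R) (beta : K)
  (a : int -> K) : Prop :=
  exists m : int, supported_from a m /\
    forall e : R, 0 < e -> exists N : nat, forall n : nat, (N <= n)%N ->
      v (psum a beta m n) < e.

(* Main.v *)
Require Import Defs.
From HB Require Import structures.
From mathcomp Require Import all_boot all_order all_algebra.
From mathcomp Require Import reals.
From mathcomp Require Import zify ring lra.
Import Order.TTheory GRing.Theory Num.Theory.
Local Open Scope ring_scope.

Section Aux.
Variables (K : fieldType) (R : realType) (v : K -> R).
Hypotheses (v0 : forall x, 0 <= v x) (veq : forall x, v x = 0 <-> x = 0)
  (vM : forall x y, v (x * y) = v x * v y)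
  (vD : forall x y, v (x + y) <= Num.max (v x) (v y)).

Lemma v1 : v 1 = 1.
Proof.
have h := vM 1 1; rewrite mulr1 in h.
have hn : v 1 != 0 by apply/eqP => /veq /eqP; rewrite oner_eq0.
have : v 1 * (v 1 - 1) = 0 by rewrite mulrBr mulr1 -h subrr.
by move/eqP; rewrite mulf_eq0 (negbTE hn) subr_eq0 /= => /eqP.
Qed.

Lemma vN x : v (- x) = v x.
Proof.
have h := vM (-1) (-1); rewrite mulrNN mulr1 v1 in h.
have h0 := v0 (-1).
have : v (-1) = 1 by nra.
by move=> e; rewrite -mulN1r vM e mul1r.
Qed.

Lemma vX x n : v (x ^+ n) = v x ^+ n.
Proof. by elim: n => [|n IH]; rewrite ?expr0 ?v1 // !exprS vM IH. Qed.

Lemma vV x : x != 0 -> v (x^-1) = (v x)^-1.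
Proof.
move=> x0; have h := vM x x^-1; rewrite mulfV // v1 in h.
have hx : v x != 0 by apply/eqP => /veq /eqP; rewrite (negbTE x0).
apply: (mulfI hx); rewrite -h divff //.
Qed.

Lemma vsum_le n (F : 'I_n -> K) c : 0 <= c -> (forall i, v (F i) <= c) ->
  v (\sum_(i < n) F i) <= c.
Proof.
move=> c0 hF; apply: (big_ind (fun x => v x <= c)) => //.
  by have [_ ->] := veq 0.
move=> x y hx hy; apply: le_trans (vD x y) _.
by rewrite ge_max hx hy.
Qed.
End Aux.

Theorem mainTheorem8 (K : fieldType) (R : realType) (f : {poly int}) (beta : K)
  (v : K -> R) :
  irreducible_poly f ->
  root (map_poly intr f) beta ->
  [pchar K] =i pred0 ->
  generated_by beta ->
  nonarch_absval v ->
  stable v beta ->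
  forall g : int -> K, OP_laurent v g -> evalP_zero v beta g ->
  exists h : int -> K, OP_laurent v h /\
    forall n : int, g n = beta * h n - h (n - 1).
Proof.
move=> _ _ _ _ [v0 veq vM vD _] Hst g [gO _] [m [gsupp Hev]].
have vz : v 0 = 0 by have [_ ->] := veq 0.
case: (eqVneq beta 0) => [->|b0].
  exists (fun n => - g (n + 1)); split; last first.
    by move=> n; rewrite mul0r sub0r opprK subrK.
  split; first by move=> n; rewrite vN //; apply: gO.
  exists (m - 1) => n hn; rewrite gsupp ?oppr0 //; lia.
have bu : beta \is a GRing.unit by rewrite unitfE.
have b1 : v beta <= 1.
  have [N HN] := Hst 1 ltr01.
  have := HN N.+1 (leqnSn N); rewrite vX //.
  case: (lerP (v beta) 1) => // hb h; exfalso.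
  have := exprn_ege1 N.+1 (ltW hb); lra.
have vpow_mono : forall (j : int) (d : nat), v (beta ^ (j + d%:Z)) <= v (beta ^ j).
  move=> j d; rewrite exprzDr // vM.
  have -> : beta ^ (d%:Z) = beta ^+ d by [].
  rewrite vX //.
  have := v0 (beta ^ j); have := exprn_ile1 d (v0 beta) b1; nra.
pose H (n : int) := if n < m then 0 else psum g beta m (`|n - m|%N.+1).
have Hm : forall k : nat, H (m + k%:Z) = psum g beta m k.+1.
  move=> k; rewrite /H ifF; last by apply/negbTE; rewrite -leNgt; lia.
  by congr (psum _ _ _ _.+1); lia.
have H0 : forall n, n < m -> H n = 0 by move=> n hn; rewrite /H hn.
have Hge : forall n, m <= n -> exists k : nat, n = m + k%:Z.
  move=> n hn; exists `|n - m|%N; lia.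
have Hrec : forall n, H n = H (n - 1) + g n * beta ^ n.
  move=> n; case: (ltrP n m) => hn.
    by rewrite !H0 ?gsupp ?mul0r ?addr0 //; lia.
  have [k ->] := Hge n hn; case: k => [|k].
    rewrite [H (_ - 1)]H0; last by lia.
    by rewrite Hm /psum big_ord1 add0r addr0.
  have -> : m + k.+1%:Z - 1 = m + k%:Z by lia.
  by rewrite !Hm /psum big_ord_recr.
have Hb : forall k : nat, v (psum g beta m k.+1) <= v (beta ^ (m + k%:Z + 1)).
  move=> k; set c := v (beta ^ (m + k%:Z + 1)); set Hk := psum g beta m k.+1.
  case: (lerP (v Hk) c) => // hc; exfalso.
  have e0 : 0 < v Hk by apply: le_lt_trans (v0 _) hc.
  have [N HN] := Hev _ e0.
  have hN : (k.+1 <= maxn N k.+1)%N by apply: leq_maxr.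
  have := HN _ (leq_maxl N k.+1).
  rewrite /psum -(subnKC hN) big_split_ord /= -/(psum g beta m k.+1) -/Hk.
  set T := \sum_(i < _) _ => hT.
  have vT : v T <= c.
    apply: vsum_le => // [|i]; first exact: v0.
    rewrite vM; apply: le_trans (_ : v (beta ^ (m + (k.+1 + i)%N%:Z)) <= c).
      have := gO (m + (k.+1 + i)%N%:Z); have := v0 (beta ^ (m + (k.+1 + i)%N%:Z)).
      nra.
    have -> : m + (k.+1 + i)%N%:Z = m + k%:Z + 1 + i%:Z by lia.
    exact: vpow_mono.
  have : v Hk <= Num.max (v (Hk + T)) (v (- T)) by rewrite -{1}(addrK T Hk); apply: vD.
  rewrite vN // le_max => /orP [h|h]; lra.
pose h (n : int) := H n * (beta ^ (n + 1))^-1.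
exists h; split.
  split; last first.
    by exists m => n hn; rewrite /h H0 // mul0r.
  move=> n; rewrite /h vM vV ?expfz_neq0 //.
  case: (ltrP n m) => hn; first by rewrite H0 // vz mul0r ler01.
  have [k ->] := Hge n hn; rewrite Hm.
  have cp : 0 < v (beta ^ (m + k%:Z + 1)).
    rewrite lt_def v0 andbT; apply/eqP => /veq /eqP; by rewrite (negbTE (expfz_neq0 _ b0)).
  by rewrite ler_pdivrMr // mul1r; apply: Hb.
move=> n; rewrite /h subrK (Hrec n) exprzDr // expr1z.
have bn : beta ^ n != 0 by apply: expfz_neq0.
by field; rewrite bn b0.
Qed.
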